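(* Let $H^0\subset\mathrm{O}(1,n+1)$ be a subgroup that acts indecomposably on $\mathbb{R}^{1,n+1}$ and stabilises a null line $L$. Then the normaliser of $H^0$ stabilises $L$, i.e. $\mathrm{Nor}_{\mathrm{O}(1,n+1)}(H^0)\subset\mathrm{Stab}_{\mathrm{O}(1,n+1)}(L)$. In particular, if $H\subset\mathrm{O}(1,n+1)$ is an immersed Lie subgroup whose identity component $H^0$ acts indecomposably and stabilises $L$, then $H$ stabilises $L$ and $H$ acts indecomposably.
   Context: $\mathbb{R}^{1,n+1}$ denotes Minkowski space of signature $(1,n+1)$. A subgroup acts indecomposably if the Minkowski inner product is degenerate on every proper nonzero invariant subspace. *)

(* Defs.v *)
(* real Minkowski space R^{1,n+1} modelled by row vectors 'rV[R]_(n.+2)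
   over an arbitrary R : realType (the real numbers). *)
From HB Require Import structures.
From mathcomp Require Import all_boot all_order all_algebra.
From mathcomp Require Import reals.
Set Implicit Arguments. Unset Strict Implicit. Unset Printing Implicit Defensive.
Import Order.TTheory GRing.Theory Num.Theory.
Local Open Scope ring_scope.

Definition eta {R : realType} (n : nat) : 'M[R]_(n.+2) :=
  \matrix_(i, j) (if i == j then (if i == ord0 then -1 else 1) else 0).

Definition mink {R : realType} {n : nat} (u v : 'rV[R]_(n.+2)) : R :=
  (u *m eta n *m v^T) ord0 ord0.

(* O(1,n+1): matrices A (acting on column vectors x |-> A x) preserving eta.
   On row vectors the action is u |-> u *m A^T. *)
Definition in_O {R : realType} {n : nat} (A : 'M[R]_(n.+2)) : Prop :=
  A^T *m eta n *m A = eta n.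

Definition subgroup_O {R : realType} {n : nat} (G : 'M[R]_(n.+2) -> Prop) : Prop :=
  [/\ forall A, G A -> in_O A,
      G 1%:M,
      (forall A B, G A -> G B -> G (A *m B)) &
      (forall A, G A -> G (invmx A))].

Definition invariant_by {R : realType} {n : nat} (A : 'M[R]_(n.+2)) {m : nat}
  (U : 'M[R]_(m, n.+2)) : Prop := (U *m A^T <= U)%MS.

Definition degenerate_on {R : realType} {n : nat} {m : nat} (U : 'M[R]_(m, n.+2)) : Prop :=
  exists u : 'rV[R]_(n.+2), [/\ (u <= U)%MS, u != 0 &
    forall v : 'rV[R]_(n.+2), (v <= U)%MS -> mink u v = 0].

Definition indecomposable {R : realType} {n : nat} (G : 'M[R]_(n.+2) -> Prop) : Prop :=
  forall U : 'M[R]_(n.+2),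
    (forall A, G A -> invariant_by A U) ->
    (0 < \rank U)%N -> (\rank U < n.+2)%N -> degenerate_on U.

Definition null_line {R : realType} {n : nat} (l : 'rV[R]_(n.+2)) : Prop :=
  l != 0 /\ mink l l = 0.

Definition stabilises {R : realType} {n : nat} (A : 'M[R]_(n.+2)) (l : 'rV[R]_(n.+2)) : Prop :=
  invariant_by A l.

Definition normalises {R : realType} {n : nat} (g : 'M[R]_(n.+2))
  (G : 'M[R]_(n.+2) -> Prop) : Prop :=
  in_O g /\ forall h, G h <-> G (g *m h *m invmx g).

Definition normal_in {R : realType} {n : nat} (N H : 'M[R]_(n.+2) -> Prop) : Prop :=
  (forall A, N A -> H A) /\ (forall g h, H g -> N h -> N (g *m h *m invmx g)).

(* Main.v *)
Require Import Defs.
From HB Require Import structures.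
From mathcomp Require Import all_boot all_order all_algebra.
From mathcomp Require Import reals.
From mathcomp Require Import ring lra.
Import Order.TTheory GRing.Theory Num.Theory.
Local Open Scope ring_scope.

Section S.
Variable R : realType.
Variable n : nat.
Implicit Types u v w : 'rV[R]_(n.+2).

Definition cf (i : 'I_n.+2) : R := if i == ord0 then -1 else 1.

Lemma minkE u v : mink u v = \sum_i cf i * (u 0 i * v 0 i).
Proof.
rewrite /mink !mxE; apply: eq_bigr => j _; rewrite !mxE.
rewrite (bigD1 j) //= big1 => [|k /negbTE nk]; last first.
  rewrite !mxE; case: (k =P j) => [e|_]; last by rewrite mulr0.
  by move: nk; rewrite e eqxx.
rewrite !mxE eqxx addr0 /cf; case: (j == ord0); ring.
Qed.

Lemma mink_sym u v : mink u v = mink v u.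
Proof. rewrite !minkE; apply: eq_bigr => i _; ring. Qed.

Lemma mink_linl a b u v w : mink (a *: u + b *: v) w = a * mink u w + b * mink v w.
Proof.
rewrite !minkE !mulr_sumr -big_split /=; apply: eq_bigr => i _; rewrite !mxE; ring.
Qed.

Lemma mink_linr a b u v w : mink w (a *: u + b *: v) = a * mink w u + b * mink w v.
Proof. by rewrite mink_sym mink_linl !(mink_sym w). Qed.

Lemma spatial0 w : w 0 ord0 = 0 -> mink w w = 0 -> w = 0.
Proof.
move=> w0; rewrite minkE (bigD1 ord0) //= w0 mul0r mulr0 add0r => hs.
have hz : forall i : 'I_n.+2, i != ord0 -> cf i * (w 0 i * w 0 i) = 0.
  apply: psumr_eq0P hs => i ni.
  by rewrite /cf (negbTE ni) mul1r -expr2 sqr_ge0.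
apply/rowP => i; rewrite mxE.
case: (eqVneq i ord0) => [->//|ni].
have := hz i ni; rewrite /cf (negbTE ni) mul1r.
by move/eqP; rewrite mulf_eq0 orbb => /eqP.
Qed.

Lemma null_orth (l l' : 'rV[R]_(n.+2)) : l != 0 -> mink l l = 0 -> mink l' l' = 0 -> mink l l' = 0 ->
  (l' <= l)%MS.
Proof.
move=> nl ll l'l' ll'.
set t := l 0 ord0; set s := l' 0 ord0.
have tn0 : t != 0.
  apply/eqP => t0; move/eqP: nl; apply; exact: spatial0.
have w0 : s *: l + (- t) *: l' = 0.
  apply: spatial0; first by rewrite !mxE -/t -/s; ring.
  rewrite !mink_linl !mink_linr (mink_sym l' l) ll l'l' ll'; ring.
have -> : l' = (s / t) *: l.
  apply: (scalerI (a := -t)); first by rewrite oppr_eq0.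
  rewrite scalerA mulNr mulrC divfK // scaleNr; apply/eqP; rewrite eq_sym -addr_eq0 addrC.
  by rewrite -oppr_eq0 opprD scaleNr opprK -scaleNr addrC w0.
exact: scalemx_sub.
Qed.

Lemma uniq_line (H0 : 'M[R]_(n.+2) -> Prop) (l l' : 'rV[R]_(n.+2)) :
  (0 < n)%N -> indecomposable H0 -> null_line l -> null_line l' ->
  (forall h, H0 h -> stabilises h l) -> (forall h, H0 h -> stabilises h l') ->
  (l' <= l)%MS.
Proof.
move=> n0 indec [nl ll] [nl' l'l'] sl sl'.
apply: contraT => nsub.
have ll'0 : mink l l' != 0.
  by apply: contra nsub => /eqP; apply: null_orth.
have : degenerate_on (l + l')%MS.
  apply: indec.
- move=> A HA; rewrite /invariant_by addsmxMr; apply: addsmxS; [exact: sl | exact: sl'].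
- by apply: leq_trans _ (mxrankS (addsmxSl l l')); rewrite rank_rV nl.
- apply: (leq_ltn_trans (mxrank_adds_leqif l l').1).
  apply: (leq_ltn_trans (leq_add (rank_leq_row l) (rank_leq_row l'))).
  by rewrite addn1 ltnS.
move=> [u [uU u0 hu]].
- move/sub_addsmxP: uU => [[a b] /= ue].
  rewrite [a]mx11_scalar [b]mx11_scalar !mul_scalar_mx in ue.
  have h1 := hu l (addsmxSl l l').
  have h2 := hu l' (addsmxSr l l').
  rewrite ue mink_linl ll (mink_sym l' l) in h1.
  rewrite ue mink_linl l'l' in h2.
  have b0 : b 0 0 = 0.
    by apply/eqP; move: h1; rewrite mulr0 add0r => /eqP; rewrite mulf_eq0 (negbTE ll'0) orbF.
  have a0 : a 0 0 = 0.
    by apply/eqP; move: h2; rewrite mulr0 addr0 => /eqP; rewrite mulf_eq0 (negbTE ll'0) orbF.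
  by rewrite ue a0 b0 !scale0r addr0 eqxx in u0.
Qed.

Lemma eta2 : @Defs.eta R n *m @Defs.eta R n = 1%:M :> 'M[R]_(n.+2).
Proof.
apply/matrixP => i j; rewrite !mxE (bigD1 i) //= big1 => [|k /negbTE nk]; last first.
  rewrite !mxE; case: (i =P k) => [e|_]; last by rewrite mul0r.
  by move: nk; rewrite e eqxx.
rewrite !mxE eqxx addr0; case: (i =P j) => [->|_]; last by rewrite mulr0.
by case: (j == ord0); rewrite ?mulrNN mulr1.
Qed.

Lemma O_unit (g : 'M[R]_(n.+2)) : in_O g -> g \in unitmx.
Proof.
rewrite /in_O => hg.
have : (@Defs.eta R n *m g^T *m @Defs.eta R n) *m g = 1%:M by rewrite -!mulmxA [g^T *m _]mulmxA hg eta2.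
by move/mulmx1_unit => [].
Qed.

Lemma key (H0 : 'M[R]_(n.+2) -> Prop) (l : 'rV[R]_(n.+2)) (g : 'M[R]_(n.+2)) :
  (0 < n)%N -> indecomposable H0 -> null_line l ->
  (forall h, H0 h -> stabilises h l) -> in_O g ->
  (forall h, H0 h -> H0 (invmx g *m h *m g)) -> stabilises g l.
Proof.
move=> n0 indec [nl ll] sl hg hc.
have gu := O_unit _ hg.
move: (hg); rewrite /in_O => hg'.
apply: (uniq_line H0 l (l *m g^T) n0 indec (conj nl ll)); last first.
- move=> h Hh; rewrite /stabilises /invariant_by.
  have e : g^T *m h^T = (invmx g *m h *m g)^T *m g^T.
    by rewrite -!trmx_mul; congr (_^T); rewrite !mulmxA mulmxV // mul1mx.
  rewrite -mulmxA e mulmxA; apply: submxMr; exact: sl _ (hc _ Hh).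
- by [].
- split.
  + apply: contra nl => /eqP h0; apply/eqP.
    have -> : l = l *m g^T *m (invmx g)^T by rewrite -mulmxA -trmx_mul mulVmx // trmx1 mulmx1.
    by rewrite h0 !mul0mx.
  + rewrite /mink trmx_mul trmxK !mulmxA -[l *m _ *m _ *m g]mulmxA -[l *m _ *m _]mulmxA. by rewrite [g^T *m _]mulmxA hg'.
Qed.
End S.

Theorem lemma1 (R : realType) (n : nat) (H0 : 'M[R]_(n.+2) -> Prop)
    (l : 'rV[R]_(n.+2)) :
  (0 < n)%N ->
  subgroup_O H0 -> indecomposable H0 ->
  null_line l -> (forall h, H0 h -> stabilises h l) ->
  (forall g, normalises g H0 -> stabilises g l) /\
  (forall H : 'M[R]_(n.+2) -> Prop,
     subgroup_O H -> normal_in H0 H ->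
     (forall h, H h -> stabilises h l) /\ indecomposable H).
Proof.
move=> n0 [HO _ _ _] indec nl sl; split.
- move=> g [hg hn]; have gu := @O_unit _ _ _ hg.
  apply: (@key R n H0 l g n0 indec nl sl hg) => h Hh; apply/(hn _).
  by rewrite !mulmxA mulmxV // mul1mx -mulmxA mulmxV // mulmx1.
- move=> H [HO' _ _ Hinv] [sub nrm]; split.
  + move=> g Hg; apply: (@key R n H0 l g n0 indec nl sl (HO' _ Hg)).
    by move=> h Hh; have := nrm _ _ (Hinv _ Hg) Hh; rewrite invmxK.
  + move=> U inv r1 r2; apply: indec => // A HA; exact: inv _ (sub _ HA).
Qed.
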